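(* Let $$E=\begin{bmatrix} J_{k,a} & J_{k,b} & -J_{k,c} & -J_{k,d} & J_{k,e} & -J_{k,f} & 0 & 0 \\ -J_{k,a} & -J_{k,b} & J_{k,c} & J_{k,d} & -J_{k,e} & J_{k,f} & 0 & 0 \\ J_{l,a} & -J_{l,b} & J_{l,c} & -J_{l,d} & 0 & 0 & J_{l,g} & -J_{l,h} \\ -J_{l,a} & J_{l,b} & -J_{l,c} & J_{l,d} & 0 & 0 & -J_{l,g} & J_{l,h} \\ \end{bmatrix}$$ where any column index in each block is a nonnegative integer, and $k,l>0$, $a+b+c+d>0$, $e+f>0$, $g+h>0$, $E\mathbf{1}=0$ and $\mathbf{1}^TE=0^T$. Let \begin{align*} A=\begin{bmatrix} 0 & 0 & J_{k,c} & J_{k,d} & 0 & J_{k,f} & X_{11} & X_{12} \\ J_{k,a} & J_{k,b} & 0 & 0 & J_{k,e} & 0 & X_{21} & X_{22} \\ 0 & J_{l,b} & 0 & J_{l,d} & Y_{11} & Y_{12} & 0 & J_{l,h} \\ J_{l,a} & 0 & J_{l,c} & 0 & Y_{21} & Y_{22} & J_{l,g} & 0 \\ \end{bmatrix} \end{align*} where each block of $A$ is a $(0,1)$ matrix. Then, $A$ and $A+E$ are Gram mates if and only if the following conditions are satisfied: \begin{enumerate} \item $\mathbf{1}^TX_{1i}=\mathbf{1}^TX_{2i}$ and $\mathbf{1}^TY_{1i}=\mathbf{1}^TY_{2i}$ for $i=1,2$; \item $\begin{bmatrix} X_{11} & X_{12}\\ X_{21} & X_{22} \end{bmatrix}\begin{bmatrix}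 \mathbf{1}\\ -\mathbf{1} \end{bmatrix}=\frac{g-h}{2}\begin{bmatrix} \mathbf{1}\\ \mathbf{1} \end{bmatrix}$ and $\begin{bmatrix} Y_{11} & Y_{12}\\ Y_{21} & Y_{22} \end{bmatrix}\begin{bmatrix} \mathbf{1}\\ -\mathbf{1} \end{bmatrix}=\frac{e-f}{2}\begin{bmatrix} \mathbf{1}\\ \mathbf{1} \end{bmatrix}$ where $g-h$ and $e-f$ are even. \end{enumerate}
   Context: $J_{p,q}$ denotes the $p\times q$ all-ones matrix (absent if $p=0$ or $q=0$) and $\mathbf{1}$ an all-ones column vector of appropriate size. Two $(0,1)$ matrices $A\neq B$ are Gram mates if $AA^T=BB^T$ and $A^TA=B^TB$. *)

(* Defs.v *)
From HB Require Import structures.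
From mathcomp Require Import all_boot all_order all_algebra.
Set Implicit Arguments. Unset Strict Implicit. Unset Printing Implicit Defensive.
Import Order.TTheory GRing.Theory Num.Theory.
Local Open Scope ring_scope.

Definition J (p q : nat) : 'M[int]_(p, q) := const_mx 1.

Definition is01 (m n : nat) (M : 'M[int]_(m, n)) : Prop :=
  forall i j, M i j = 0 \/ M i j = 1.

Definition gram_mates (m n : nat) (A B : 'M[int]_(m, n)) : Prop :=
  [/\ is01 A, is01 B, A <> B, A *m A^T = B *m B^T & A^T *m A = B^T *m B].

Definition row8 (r a b c d e f g h : nat)
  (B1 : 'M[int]_(r, a)) (B2 : 'M[int]_(r, b)) (B3 : 'M[int]_(r, c))
  (B4 : 'M[int]_(r, d)) (B5 : 'M[int]_(r, e)) (B6 : 'M[int]_(r, f))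
  (B7 : 'M[int]_(r, g)) (B8 : 'M[int]_(r, h))
  : 'M[int]_(r, a + (b + (c + (d + (e + (f + (g + h))))))) :=
  row_mx B1 (row_mx B2 (row_mx B3 (row_mx B4 (row_mx B5 (row_mx B6 (row_mx B7 B8)))))).

Definition col4 (k l n : nat) (R1 R2 : 'M[int]_(k, n)) (R3 R4 : 'M[int]_(l, n))
  : 'M[int]_(k + (k + (l + l)), n) :=
  col_mx R1 (col_mx R2 (col_mx R3 R4)).

Definition Emat (k l a b c d e f g h : nat) :=
  col4
    (row8 (J k a) (J k b) (- J k c) (- J k d) (J k e) (- J k f) 0 0)
    (row8 (- J k a) (- J k b) (J k c) (J k d) (- J k e) (J k f) 0 0)
    (row8 (J l a) (- J l b) (J l c) (- J l d) 0 0 (J l g) (- J l h))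
    (row8 (- J l a) (J l b) (- J l c) (J l d) 0 0 (- J l g) (J l h)).

Definition Amat (k l a b c d e f g h : nat)
  (X11 : 'M[int]_(k, g)) (X12 : 'M[int]_(k, h))
  (X21 : 'M[int]_(k, g)) (X22 : 'M[int]_(k, h))
  (Y11 : 'M[int]_(l, e)) (Y12 : 'M[int]_(l, f))
  (Y21 : 'M[int]_(l, e)) (Y22 : 'M[int]_(l, f)) :=
  col4
    (row8 0 0 (J k c) (J k d) 0 (J k f) X11 X12)
    (row8 (J k a) (J k b) 0 0 (J k e) 0 X21 X22)
    (row8 0 (J l b) 0 (J l d) Y11 Y12 0 (J l h))
    (row8 (J l a) 0 (J l c) 0 Y21 Y22 (J l g) 0).
Arguments Amat : clear implicits.
Arguments Emat : clear implicits.

(* Main.v *)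
Require Import Defs.
From HB Require Import structures.
From mathcomp Require Import all_boot all_order all_algebra.
From mathcomp Require Import zify ring lra.
Import Order.TTheory GRing.Theory Num.Theory.
Local Open Scope ring_scope.

Module L.

Lemma trJ m n : (J m n)^T = J n m.
Proof. by apply/matrixP=> i j; rewrite !mxE. Qed.

Lemma mulJJ m n p : J m n *m J n p = n%:R *: J m p.
Proof.
apply/matrixP=> i j; rewrite !mxE.
under eq_bigr do rewrite !mxE mulr1.
by rewrite sumr_const card_ord mulr1.
Qed.

Lemma J_col m n p : J (m + n) p = col_mx (J m p) (J n p).
Proof. by rewrite /J col_mx_const. Qed.
Lemma J_row m n p : J p (m + n) = row_mx (J p m) (J p n).
Proof. by rewrite /J row_mx_const. Qed.

Lemma trN m n (A : 'M[int]_(m,n)) : (- A)^T = - A^T.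
Proof. exact: linearN. Qed.
Ltac simp := rewrite ?tr_col_mx ?tr_row_mx ?trN ?trmx0 ?trJ; repeat progress rewrite ?mul_col_mx ?mul_mx_row ?mul_row_col ?tr_col_mx ?tr_row_mx
   ?mulNmx ?mulmxN ?mul0mx ?mulmx0 ?mulJJ ?scale1r ?opprK ?oppr0
   ?scale_col_mx ?scale_row_mx ?scalerN ?add_col_mx ?add_row_mx ?opp_col_mx ?opp_row_mx ?addr0 ?add0r ?scaler0 ?scale0r ?row_mx0 ?col_mx0.

Lemma colE m1 m2 n (A1 B1 : 'M[int]_(m1,n)) (A2 B2 : 'M[int]_(m2,n)) : A1 = B1 -> A2 = B2 -> col_mx A1 A2 = col_mx B1 B2.
Proof. by move=> -> ->. Qed.
Lemma rowE m n1 n2 (A1 B1 : 'M[int]_(m,n1)) (A2 B2 : 'M[int]_(m,n2)) : A1 = B1 -> A2 = B2 -> row_mx A1 A2 = row_mx B1 B2.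
Proof. by move=> -> ->. Qed.
Ltac splitb := repeat (match goal with |- col_mx _ _ = col_mx _ _ => apply: colE
  | |- row_mx _ _ = row_mx _ _ => apply: rowE
  | |- col_mx _ _ = 0 => rewrite -col_mx0; apply: colE
  | |- row_mx _ _ = 0 => rewrite -row_mx0; apply: rowE
  | |- 0 = col_mx _ _ => rewrite -col_mx0; apply: colE
  | |- 0 = row_mx _ _ => rewrite -row_mx0; apply: rowE end).

Ltac genprod := repeat match goal with |- context [?X *m ?Y] => let m := fresh "m" in set m := (X *m Y); clearbody m end.
Ltac genent := repeat match goal with |- context [@fun_of_matrix _ _ _ ?M ?i ?j] => is_var M;
   let z := fresh "z" in set z := @fun_of_matrix _ _ _ M i j; clearbody z end.
Ltac fin := try reflexivity; genprod; apply/matrixP=> ? ?; rewrite ?mxE ?ord1 ?eqxx ?mulr1n; genent; lia.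

Section S.
Variables (k l a b c d e f g h : nat).
Definition pv : 'cV[int]_(k+(k+(l+l))) := col4 (J k 1) (- J k 1) 0 0.
Definition qv : 'cV[int]_(k+(k+(l+l))) := col4 0 0 (J l 1) (- J l 1).
Definition r1 := row8 (J 1 a) (J 1 b) (- J 1 c) (- J 1 d) (J 1 e) (- J 1 f) (0 : 'M_(1,g)) (0 : 'M_(1,h)).
Definition r3 := row8 (J 1 a) (- J 1 b) (J 1 c) (- J 1 d) (0 : 'M_(1,e)) (0 : 'M_(1,f)) (J 1 g) (- J 1 h).

Lemma r1r1 : r1 *m r1^T = (a%:Z + b%:Z + c%:Z + d%:Z + e%:Z + f%:Z)%:M.
Proof. rewrite /r1 /row8; simp. fin. Qed.
Lemma r3r3 : r3 *m r3^T = (a%:Z + b%:Z + c%:Z + d%:Z + g%:Z + h%:Z)%:M.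
Proof. rewrite /r3 /row8; simp. fin. Qed.
Lemma r1r3 : r1 *m r3^T = (a%:Z - b%:Z - c%:Z + d%:Z)%:M.
Proof. rewrite /r1 /r3 /row8; simp. fin. Qed.
Lemma r1J : r1 *m J _ 1 = (a%:Z + b%:Z - c%:Z - d%:Z + e%:Z - f%:Z)%:M.
Proof. rewrite /r1 /row8 !J_col; simp. fin. Qed.
Lemma r3J : r3 *m J _ 1 = (a%:Z - b%:Z + c%:Z - d%:Z + g%:Z - h%:Z)%:M.
Proof. rewrite /r3 /row8 !J_col; simp. fin. Qed.
Lemma pTp : pv^T *m pv = (k%:Z *+ 2)%:M.
Proof. rewrite /pv /col4; simp. fin. Qed.
Lemma qTq : qv^T *m qv = (l%:Z *+ 2)%:M.
Proof. rewrite /qv /col4; simp. fin. Qed.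
Lemma pTq : pv^T *m qv = 0.
Proof. rewrite /pv /qv /col4; simp. fin. Qed.
Lemma qTp : qv^T *m pv = 0.
Proof. rewrite /pv /qv /col4; simp. fin. Qed.

Lemma Edec : Emat k l a b c d e f g h = pv *m r1 + qv *m r3.
Proof. rewrite /Emat /pv /qv /r1 /r3 /col4 /row8; simp. done. Qed.

Lemma EJ0 : Emat k l a b c d e f g h *m J _ 1 = 0 -> (0 < k)%N -> (0 < l)%N ->
  a%:Z + b%:Z + e%:Z = c%:Z + d%:Z + f%:Z /\ a%:Z + c%:Z + g%:Z = b%:Z + d%:Z + h%:Z.
Proof.
rewrite Edec mulmxDl -!mulmxA r1J r3J !mul_mx_scalar => H hk hl.
have H1 := congr1 (mulmx pv^T) H; have H2 := congr1 (mulmx qv^T) H.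
rewrite mulmxDr -!scalemxAr pTp pTq mulmx0 scaler0 addr0 in H1.
rewrite mulmxDr -!scalemxAr qTq qTp mulmx0 scaler0 add0r in H2.
move/matrixP/(_ 0 0): H1; move/matrixP/(_ 0 0): H2; rewrite !mxE !eqxx !mulr1n.
move=> H2 H1; split; nia.
Qed.

Variables (X11 : 'M[int]_(k, g)) (X12 : 'M[int]_(k, h))
  (X21 : 'M[int]_(k, g)) (X22 : 'M[int]_(k, h))
  (Y11 : 'M[int]_(l, e)) (Y12 : 'M[int]_(l, f))
  (Y21 : 'M[int]_(l, e)) (Y22 : 'M[int]_(l, f)).
Let A := Amat k l a b c d e f g h X11 X12 X21 X22 Y11 Y12 Y21 Y22.

Definition U3 := Y11 *m J e 1 - Y12 *m J f 1 + (a%:Z - c%:Z) *: J l 1.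
Definition U4 := Y21 *m J e 1 - Y22 *m J f 1 + (b%:Z - d%:Z) *: J l 1.
Definition W1 := X11 *m J g 1 - X12 *m J h 1 + (c%:Z - d%:Z) *: J k 1.
Definition W2 := X21 *m J g 1 - X22 *m J h 1 + (a%:Z - b%:Z) *: J k 1.

Lemma uvec : a%:Z + b%:Z + e%:Z = c%:Z + d%:Z + f%:Z ->
  A *m r1^T + (c%:Z + d%:Z + f%:Z) *: pv + (a%:Z - b%:Z - c%:Z + d%:Z) *: qv = col4 0 0 U3 U4.
Proof. move=> E1; rewrite /A /Amat /col4 /row8 /r1 /pv /qv /U3 /U4; simp. splitb; fin. Qed.

Lemma wvec : a%:Z + c%:Z + g%:Z = b%:Z + d%:Z + h%:Z ->
  A *m r3^T + (b%:Z + d%:Z + h%:Z) *: qv = col4 W1 W2 0 0.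
Proof. move=> E2; rewrite /A /Amat /col4 /row8 /r3 /qv /W1 /W2; simp. splitb; fin. Qed.

Definition col8 n (B1 : 'M[int]_(a,n)) (B2 : 'M[int]_(b,n)) (B3 : 'M[int]_(c,n)) (B4 : 'M[int]_(d,n))
  (B5 : 'M[int]_(e,n)) (B6 : 'M[int]_(f,n)) (B7 : 'M[int]_(g,n)) (B8 : 'M[int]_(h,n)) :=
  col_mx B1 (col_mx B2 (col_mx B3 (col_mx B4 (col_mx B5 (col_mx B6 (col_mx B7 B8)))))).

Definition Ug := X11^T *m J k 1 - X21^T *m J k 1.
Definition Uh := X12^T *m J k 1 - X22^T *m J k 1.
Definition Ve := Y11^T *m J l 1 - Y21^T *m J l 1.
Definition Vf := Y12^T *m J l 1 - Y22^T *m J l 1.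

Lemma alpha : A^T *m pv + k%:Z *: r1^T + 0 *: r3^T = @col8 1 0 0 0 0 0 0 Ug Uh.
Proof. rewrite /A /Amat /col4 /row8 /r1 /pv /col8 /Ug /Uh; simp. splitb; fin. Qed.

Lemma beta : A^T *m qv + l%:Z *: r3^T = @col8 1 0 0 0 0 Ve Vf 0 0.
Proof. rewrite /A /Amat /col4 /row8 /r3 /qv /col8 /Ve /Vf; simp. splitb; fin. Qed.

Lemma Bexp : A + Emat k l a b c d e f g h = col4
    (row8 (J k a) (J k b) 0 0 (J k e) 0 X11 X12)
    (row8 0 0 (J k c) (J k d) 0 (J k f) X21 X22)
    (row8 (J l a) 0 (J l c) 0 Y11 Y12 (J l g) 0)
    (row8 0 (J l b) 0 (J l d) Y21 Y22 0 (J l h)).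
Proof. rewrite /A /Amat /Emat /col4 /row8; simp; rewrite ?addrN ?addNr ?addr0 ?add0r. splitb; fin. Qed.
End S.
Lemma gram_gen n m (A : 'M[int]_(n,m)) (p q : 'cV_n) (r s : 'rV_m) (c1 c3 t : int):
 r *m r^T = (c1 *+ 2)%:M -> s *m s^T = (c3 *+ 2)%:M -> r *m s^T = t%:M ->
 (A + (p *m r + q *m s)) *m (A + (p *m r + q *m s))^T - A *m A^T =
 (A *m r^T + c1 *: p + t *: q) *m p^T + p *m (A *m r^T + c1 *: p + t *: q)^T
 + (A *m s^T + c3 *: q) *m q^T + q *m (A *m s^T + c3 *: q)^T.
Proof.
move=> hr hs hrs.
have hsr : s *m r^T = t%:M by rewrite -[s]trmxK -trmx_mul hrs tr_scalar_mx.
have e1 : forall X : 'cV_n, X *m r *m r^T = (c1*+2) *: X by move=> X; rewrite -mulmxA hr mul_mx_scalar.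
have e2 : forall X : 'cV_n, X *m s *m s^T = (c3*+2) *: X by move=> X; rewrite -mulmxA hs mul_mx_scalar.
have e3 : forall X : 'cV_n, X *m r *m s^T = t *: X by move=> X; rewrite -mulmxA hrs mul_mx_scalar.
have e4 : forall X : 'cV_n, X *m s *m r^T = t *: X by move=> X; rewrite -mulmxA hsr mul_mx_scalar.
rewrite !linearD /= !linearZ /= !trmx_mul !trmxK ?mulmxDl ?mulmxDr ?mulmxDl !mulmxA.
rewrite -?scalemxAl -?scalemxAr ?mulmxA ?e1 ?e2 ?e3 ?e4 -?scalemxAl.
move: (A *m A^T) (A *m r^T *m p^T) (A *m s^T *m q^T) (p *m r *m A^T) (q *m s *m A^T)
  (p *m p^T) (q *m q^T) (p *m q^T) (q *m p^T) => *.
apply/matrixP=> i j; rewrite !mxE. ring.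
Qed.

End L.
Import L.

Lemma colmx0P m1 m2 n (A1 : 'M[int]_(m1,n)) (A2 : 'M[int]_(m2,n)) : col_mx A1 A2 = 0 -> A1 = 0 /\ A2 = 0.
Proof. by move/eqP; rewrite col_mx_eq0 => /andP[/eqP -> /eqP ->]. Qed.

Lemma entD m n (M N : 'M[int]_(m,n)) i j : (M + N) i j = M i j + N i j. Proof. by rewrite mxE. Qed.
Lemma entB m n (M N : 'M[int]_(m,n)) i j : (M - N) i j = M i j - N i j. Proof. by rewrite !mxE. Qed.
Lemma entZ m n x (M : 'M[int]_(m,n)) i j : (x *: M) i j = x * M i j. Proof. by rewrite mxE. Qed.
Lemma entN m n (M : 'M[int]_(m,n)) i j : (- M) i j = - M i j. Proof. by rewrite mxE. Qed.
Lemma entJ m n i j : J m n i j = 1. Proof. by rewrite mxE. Qed.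
Lemma ent0 m n i j : (0 : 'M[int]_(m,n)) i j = 0. Proof. by rewrite mxE. Qed.
Ltac ent := repeat progress rewrite ?entD ?entB ?entZ ?entN ?entJ ?ent0.


Lemma comb n m (w1 w2 : 'cV[int]_n) (tau dl : int) : (0 < m)%N -> (0 < n)%N ->
  (forall i, m%:Z * w1 i 0 + tau = 0) -> (forall i, m%:Z * w2 i 0 - tau = 0) ->
  \sum_i (w1 i 0 - w2 i 0) = n%:Z * dl -> forall i, 2 * w1 i 0 = dl /\ 2 * w2 i 0 = - dl.
Proof.
move=> hm hn h1 h2 hs i.
have hs2 : \sum_(j < n) (m%:Z * (w1 j 0 - w2 j 0)) = \sum_(j < n) (- tau - tau).
  by apply: eq_bigr => j _; have := h1 j; have := h2 j; nia.
rewrite -mulr_sumr hs sumr_const card_ord -mulr_natr in hs2.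
have h3 : m%:Z * dl = - tau - tau.
  apply: (@mulIf _ n%:R); first by apply/eqP; lia.
  rewrite -hs2; lia.
have := h1 i; have := h2 i; split; nia.
Qed.

Lemma is01_col m1 m2 n (A1 : 'M[int]_(m1,n)) (A2 : 'M[int]_(m2,n)) : is01 A1 -> is01 A2 -> is01 (col_mx A1 A2).
Proof. move=> h1 h2 i j; rewrite -(splitK i); case: (split i) => i' /=; by rewrite ?col_mxEu ?col_mxEd. Qed.
Lemma is01_row m n1 n2 (A1 : 'M[int]_(m,n1)) (A2 : 'M[int]_(m,n2)) : is01 A1 -> is01 A2 -> is01 (row_mx A1 A2).
Proof. move=> h1 h2 i j; rewrite -(splitK j); case: (split j) => j' /=; by rewrite ?row_mxEl ?row_mxEr. Qed.
Lemma is01_J m n : is01 (J m n). Proof. by move=> i j; right; rewrite mxE. Qed.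
Lemma is01_0 m n : is01 (0 : 'M[int]_(m,n)). Proof. by move=> i j; left; rewrite mxE. Qed.

Lemma cc0 m1 m2 n (x y : int) (A1 B1 : 'M[int]_(m1,n)) (A2 B2 : 'M[int]_(m2,n)) :
  x *: col_mx A1 A2 + y *: col_mx B1 B2 = 0 -> x *: A1 + y *: B1 = 0 /\ x *: A2 + y *: B2 = 0.
Proof. by rewrite !scale_col_mx add_col_mx; apply: colmx0P. Qed.

Lemma UgP' m n (P Q : 'M[int]_(m,n)) : (P^T *m J m 1 - Q^T *m J m 1 = 0) <-> (J 1 m *m P = J 1 m *m Q).
Proof.
have e : forall M : 'M[int]_(m,n), M^T *m J m 1 = (J 1 m *m M)^T by move=> M; rewrite trmx_mul trJ.
rewrite !e; split; last by move=> ->; rewrite subrr.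
by move/eqP; rewrite subr_eq0 => /eqP /(congr1 trmx); rewrite !trmxK.
Qed.

Section T.
Variables (k l a b c d e f g h : nat).
Variables (X11 : 'M[int]_(k, g)) (X12 : 'M[int]_(k, h))
  (X21 : 'M[int]_(k, g)) (X22 : 'M[int]_(k, h))
  (Y11 : 'M[int]_(l, e)) (Y12 : 'M[int]_(l, f))
  (Y21 : 'M[int]_(l, e)) (Y22 : 'M[int]_(l, f)).
Let A := Amat k l a b c d e f g h X11 X12 X21 X22 Y11 Y12 Y21 Y22.
Let E := Emat k l a b c d e f g h.
Let U3 : 'cV[int]_l := @U3 l a c e f Y11 Y12.
Let U4 : 'cV[int]_l := @U4 l b d e f Y21 Y22.
Let W1 : 'cV[int]_k := @W1 k c d g h X11 X12.
Let W2 : 'cV[int]_k := @W2 k a b g h X21 X22.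
Let p := pv k l.
Let q := qv k l.
Let uu := col4 (0 : 'cV_k) 0 U3 U4.
Let ww := col4 W1 W2 (0 : 'cV_l) 0.

Lemma rowgram : a%:Z + b%:Z + e%:Z = c%:Z + d%:Z + f%:Z -> a%:Z + c%:Z + g%:Z = b%:Z + d%:Z + h%:Z ->
  (A + E) *m (A + E)^T - A *m A^T = uu *m p^T + p *m uu^T + ww *m q^T + q *m ww^T.
Proof.
move=> E1 E2.
rewrite /E Edec (@gram_gen _ _ _ _ _ _ _ (c%:Z + d%:Z + f%:Z) (b%:Z + d%:Z + h%:Z) (a%:Z - b%:Z - c%:Z + d%:Z)).
- by rewrite uvec // wvec.
- rewrite r1r1; congr (_%:M); rewrite mulr2n; lia.
- rewrite r3r3; congr (_%:M); rewrite mulr2n; lia.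
- by rewrite r1r3.
Qed.

Let uc := @col8 a b c d e f g h 1 0 0 0 0 0 0 (@Ug k g X11 X21) (@Uh k h X12 X22).
Let wc := @col8 a b c d e f g h 1 0 0 0 0 (@Ve l e Y11 Y21) (@Vf l f Y12 Y22) 0 0.
Let r1 := r1 a b c d e f g h.
Let r3 := r3 a b c d e f g h.

Lemma colgram :
  (A + E)^T *m (A + E) - A^T *m A = uc *m r1 + r1^T *m uc^T + wc *m r3 + r3^T *m wc^T.
Proof.
have eT : (A + E)^T = A^T + (r1^T *m p^T + r3^T *m q^T) by rewrite /E Edec !linearD /= !trmx_mul.
have -> : A^T *m A = A^T *m (A^T)^T by rewrite trmxK.
rewrite -{2}[A + E]trmxK eT (@gram_gen _ _ _ _ _ _ _ k%:Z l%:Z 0).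
- by rewrite !trmxK alpha beta.
- by rewrite trmxK pTp.
- by rewrite trmxK qTq.
- by rewrite trmxK pTq; apply/matrixP=> i j; rewrite !mxE mul0rn.
Qed.

Lemma rowback (t : int) : U3 = - t *: J l 1 -> U4 = t *: J l 1 -> W1 = t *: J k 1 -> W2 = - t *: J k 1 ->
  uu *m p^T + p *m uu^T + ww *m q^T + q *m ww^T = 0.
Proof.
move=> h3 h4 h1 h2.
have -> : uu = - t *: q by rewrite /uu /q /qv /col4 h3 h4; simp; splitb; fin.
have -> : ww = t *: p by rewrite /ww /p /pv /col4 h1 h2; simp; splitb; fin.
rewrite !linearZ /= -?scalemxAl -?scalemxAr -?scalemxAl.
move: (q *m p^T) (p *m q^T) => P Q.
apply/matrixP=> i j; rewrite !mxE; ring.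
Qed.

Lemma rowfwd : uu *m p^T + p *m uu^T + ww *m q^T + q *m ww^T = 0 ->
  exists s tau : int, [/\ (forall i, k%:Z * U3 i 0 + s = 0), (forall i, k%:Z * U4 i 0 - s = 0), (forall i, l%:Z * W1 i 0 + tau = 0) & (forall i, l%:Z * W2 i 0 - tau = 0)].
Proof.
move=> H.
pose x1 : 'cV[int]_(k+(k+(l+l))) := col4 (J k 1) 0 0 0.
pose x3 : 'cV[int]_(k+(k+(l+l))) := col4 0 0 (J l 1) 0.
have H1 := congr1 (mulmx^~ x1) H; have H3 := congr1 (mulmx^~ x3) H.
rewrite /= mul0mx !mulmxDl -!mulmxA in H1 H3.
have e1 : p^T *m x1 = (k%:Z)%:M by rewrite /p /pv /x1 /col4; simp; fin.
have e2 : uu^T *m x1 = 0 by rewrite /uu /x1 /col4; simp; fin.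
have e3 : q^T *m x1 = 0 by rewrite /q /qv /x1 /col4; simp; fin.
have e4 : ww^T *m x1 = W1^T *m J k 1 by rewrite /ww /x1 /col4; simp; fin.
have f1 : p^T *m x3 = 0 by rewrite /p /pv /x3 /col4; simp; fin.
have f2 : uu^T *m x3 = U3^T *m J l 1 by rewrite /uu /x3 /col4; simp; fin.
have f3 : q^T *m x3 = (l%:Z)%:M by rewrite /q /qv /x3 /col4; simp; fin.
have f4 : ww^T *m x3 = 0 by rewrite /ww /x3 /col4; simp; fin.
rewrite e1 e2 e3 e4 !mulmx0 ?addr0 mul_mx_scalar [W1^T *m _]mx11_scalar mul_mx_scalar in H1.
rewrite f1 f2 f3 f4 !mulmx0 ?addr0 ?add0r mul_mx_scalar [U3^T *m _]mx11_scalar mul_mx_scalar in H3.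
exists ((W1^T *m J k 1) 0 0), ((U3^T *m J l 1) 0 0).
move: H1 H3; rewrite /uu /ww /p /q /pv /qv /col4; simp.
move/colmx0P => [_ /colmx0P [_ /colmx0P [/matrixP h3 /matrixP h4]]].
move/colmx0P => [/matrixP h1 /colmx0P [/matrixP h2 _]].
split => i.
- by have := h3 i 0; rewrite entD entZ entZ entJ ent0 mulr1.
- by have := h4 i 0; rewrite entB entZ entZ entJ ent0 mulr1.
- by have := h1 i 0; rewrite entD entZ entZ entJ ent0 mulr1 addrC.
- by have := h2 i 0; rewrite entD entN entZ entZ entJ ent0 mulr1 addrC.
Qed.

Lemma colback : @Ug k g X11 X21 = 0 -> @Uh k h X12 X22 = 0 -> @Ve l e Y11 Y21 = 0 -> @Vf l f Y12 Y22 = 0 ->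
  uc *m r1 + r1^T *m uc^T + wc *m r3 + r3^T *m wc^T = 0.
Proof.
move=> h1 h2 h3 h4.
have -> : uc = 0 by rewrite /uc /col8 h1 h2 !col_mx0.
have -> : wc = 0 by rewrite /wc /col8 h3 h4 !col_mx0.
by rewrite trmx0 !mul0mx !mulmx0 !addr0.
Qed.

Lemma scal0 m n (x : int) (M : 'M[int]_(m,n)) : x != 0 -> x *: M = 0 -> M = 0.
Proof. by move=> hx /eqP; rewrite scalemx_eq0 (negPf hx) => /eqP. Qed.

Lemma colfwd : (0 < a + b + c + d)%N -> uc *m r1 + r1^T *m uc^T + wc *m r3 + r3^T *m wc^T = 0 ->
  [/\ @Ug k g X11 X21 = 0, @Uh k h X12 X22 = 0, @Ve l e Y11 Y21 = 0 & @Vf l f Y12 Y22 = 0].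
Proof.
move=> hpos H.
pose y1 := @col8 a b c d e f g h 1 (J a 1) (J b 1) (- J c 1) (- J d 1) 0 0 0 0.
pose y3 := @col8 a b c d e f g h 1 (J a 1) (- J b 1) (J c 1) (- J d 1) 0 0 0 0.
have e1 : r1 *m y1 = (a%:Z + b%:Z + c%:Z + d%:Z)%:M by rewrite /r1 /L.r1 /y1 /row8 /col8; simp; fin.
have e2 : uc^T *m y1 = 0 by rewrite /uc /y1 /col8; simp; fin.
have e3 : r3 *m y1 = (a%:Z - b%:Z - c%:Z + d%:Z)%:M by rewrite /r3 /L.r3 /y1 /row8 /col8; simp; fin.
have e4 : wc^T *m y1 = 0 by rewrite /wc /y1 /col8; simp; fin.
have f1 : r1 *m y3 = (a%:Z - b%:Z - c%:Z + d%:Z)%:M by rewrite /r1 /L.r1 /y3 /row8 /col8; simp; fin.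
have f2 : uc^T *m y3 = 0 by rewrite /uc /y3 /col8; simp; fin.
have f3 : r3 *m y3 = (a%:Z + b%:Z + c%:Z + d%:Z)%:M by rewrite /r3 /L.r3 /y3 /row8 /col8; simp; fin.
have f4 : wc^T *m y3 = 0 by rewrite /wc /y3 /col8; simp; fin.
have Huc : uc = @col8 a b c d e f g h 1 0 0 0 0 0 0 (@Ug k g X11 X21) (@Uh k h X12 X22) by [].
have Hwc : wc = @col8 a b c d e f g h 1 0 0 0 0 (@Ve l e Y11 Y21) (@Vf l f Y12 Y22) 0 0 by [].
move: H; clearbody uc wc y1 y3 r1 r3 => H.
move: Huc Hwc; move: (@Ug k g X11 X21) (@Uh k h X12 X22) (@Ve l e Y11 Y21) (@Vf l f Y12 Y22) => ug uh ve vf Huc Hwc.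
have H1 : (uc *m r1 + r1^T *m uc^T + wc *m r3 + r3^T *m wc^T) *m y1 = 0 by rewrite H mul0mx.
have H3 : (uc *m r1 + r1^T *m uc^T + wc *m r3 + r3^T *m wc^T) *m y3 = 0 by rewrite H mul0mx.
rewrite !mulmxDl -!mulmxA e1 e2 e3 e4 !mulmx0 ?addr0 !mul_mx_scalar in H1.
rewrite !mulmxDl -!mulmxA f1 f2 f3 f4 !mulmx0 ?addr0 !mul_mx_scalar in H3.
have hm : (a%:Z + b%:Z + c%:Z + d%:Z) != 0 by apply/eqP; lia.
rewrite Huc Hwc /col8 in H1 H3.
move: H1 H3.
move/cc0 => [_ /cc0 [_ /cc0 [_ /cc0 [_ /cc0 [_ /cc0 [_ /cc0 [hg hh]]]]]]].
move/cc0 => [_ /cc0 [_ /cc0 [_ /cc0 [_ /cc0 [he /cc0 [hf _]]]]]].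
move: hg hh he hf; rewrite !scaler0 ?addr0 ?add0r => hg hh he hf.
by split; apply: scal0 hm _.
Qed.

Lemma sumW : J 1 k *m X11 = J 1 k *m X21 -> J 1 k *m X12 = J 1 k *m X22 ->
  \sum_i (W1 i 0 - W2 i 0) = k%:Z * (b%:Z - a%:Z + c%:Z - d%:Z).
Proof.
move=> C1 C2.
have -> : \sum_i (W1 i 0 - W2 i 0) = (J 1 k *m (W1 - W2)) 0 0.
  by rewrite mxE; apply: eq_bigr => i _; rewrite entJ mul1r entB.
rewrite /W1 /W2 /L.W1 /L.W2 !mulmxDr !mulmxN !mulmxDr !mulmxN !mulmxA C1 C2 -!scalemxAr !mulJJ.
genprod; ent; ring.
Qed.

Lemma sumU : J 1 l *m Y11 = J 1 l *m Y21 -> J 1 l *m Y12 = J 1 l *m Y22 ->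
  \sum_i (U3 i 0 - U4 i 0) = l%:Z * (a%:Z - b%:Z - c%:Z + d%:Z).
Proof.
move=> C1 C2.
have -> : \sum_i (U3 i 0 - U4 i 0) = (J 1 l *m (U3 - U4)) 0 0.
  by rewrite mxE; apply: eq_bigr => i _; rewrite entJ mul1r entB.
rewrite /U3 /U4 /L.U3 /L.U4 !mulmxDr !mulmxN !mulmxDr !mulmxN !mulmxA C1 C2 -!scalemxAr !mulJJ.
genprod; ent; ring.
Qed.

Lemma neqAB : (0 < k)%N -> (0 < a + b + c + d)%N -> A <> A + E.
Proof.
move=> hk hp H; have E0 : E = 0 by apply: (addrI A); rewrite addr0 -H.
have := congr1 (fun M => p^T *m M *m r1^T) E0; rewrite /= /E Edec mulmxDr mulmxDl !mulmxA pTp pTq !mul0mx addr0.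
rewrite -mulmxA r1r1 -scalar_mxM mulmx0 mul0mx => /matrixP /(_ 0 0); rewrite !mxE /= mulr1n => ?; nia.
Qed.

Lemma is01A : is01 X11 -> is01 X12 -> is01 X21 -> is01 X22 ->
  is01 Y11 -> is01 Y12 -> is01 Y21 -> is01 Y22 -> is01 A /\ is01 (A + E).
Proof.
move=> *; split; last rewrite /E Bexp; rewrite /A /Amat /col4 /row8;
  repeat (first [apply: is01_col | apply: is01_row | apply: is01_J | apply: is01_0 | assumption]).
Qed.

Lemma W1e i : W1 i 0 = (X11 *m J g 1) i 0 - (X12 *m J h 1) i 0 + (c%:Z - d%:Z).
Proof. by rewrite /W1 /L.W1 entD entB entZ entJ mulr1. Qed.
Lemma W2e i : W2 i 0 = (X21 *m J g 1) i 0 - (X22 *m J h 1) i 0 + (a%:Z - b%:Z).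
Proof. by rewrite /W2 /L.W2 entD entB entZ entJ mulr1. Qed.
Lemma U3e i : U3 i 0 = (Y11 *m J e 1) i 0 - (Y12 *m J f 1) i 0 + (a%:Z - c%:Z).
Proof. by rewrite /U3 /L.U3 entD entB entZ entJ mulr1. Qed.
Lemma U4e i : U4 i 0 = (Y21 *m J e 1) i 0 - (Y22 *m J f 1) i 0 + (b%:Z - d%:Z).
Proof. by rewrite /U4 /L.U4 entD entB entZ entJ mulr1. Qed.

Theorem main :
  (0 < k)%N -> (0 < l)%N -> (0 < a + b + c + d)%N -> (0 < e + f)%N -> (0 < g + h)%N ->
  Emat k l a b c d e f g h *m J _ 1 = 0 ->
  J 1 _ *m Emat k l a b c d e f g h = 0 ->
  is01 X11 -> is01 X12 -> is01 X21 -> is01 X22 ->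
  is01 Y11 -> is01 Y12 -> is01 Y21 -> is01 Y22 ->
  let A := Amat k l a b c d e f g h X11 X12 X21 X22 Y11 Y12 Y21 Y22 in
  gram_mates A (A + Emat k l a b c d e f g h) <->
  (
   [/\ J 1 k *m X11 = J 1 k *m X21, J 1 k *m X12 = J 1 k *m X22,
       J 1 l *m Y11 = J 1 l *m Y21 & J 1 l *m Y12 = J 1 l *m Y22]
   /\
   [/\ (2 %| (g%:Z - h%:Z))%Z,
       (2 %| (e%:Z - f%:Z))%Z,
       block_mx X11 X12 X21 X22 *m col_mx (J g 1) (- J h 1)
         = ((g%:Z - h%:Z) %/ 2)%Z *: J (k + k) 1
     & block_mx Y11 Y12 Y21 Y22 *m col_mx (J e 1) (- J f 1)
         = ((e%:Z - f%:Z) %/ 2)%Z *: J (l + l) 1]).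
Proof.
move=> hk hl habcd hef hgh hEJ _ i11 i12 i21 i22 j11 j12 j21 j22.
move=> A0.
have -> : A0 = A by [].
rewrite -/E.
have [E1 E2] := @EJ0 k l a b c d e f g h hEJ hk hl.
have hR := rowgram E1 E2; have hC := colgram.
have [hA01 hB01] := is01A i11 i12 i21 i22 j11 j12 j21 j22.
split.
- case=> _ _ _ hrow hcol.
  have M0 : uu *m p^T + p *m uu^T + ww *m q^T + q *m ww^T = 0 by rewrite -hR -hrow subrr.
  have N0 : uc *m r1 + r1^T *m uc^T + wc *m r3 + r3^T *m wc^T = 0 by rewrite -hC -hcol subrr.
  have [hg hh he hf] := colfwd habcd N0.
  have C1 := proj1 (UgP' _ _ _ _) hg; have C2 := proj1 (UgP' _ _ _ _) hh.
  have C3 := proj1 (UgP' _ _ _ _) he; have C4 := proj1 (UgP' _ _ _ _) hf.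
  have [s [tau [hu3 hu4 hw1 hw2]]] := rowfwd M0.
  have cW := @comb _ _ _ _ _ _ hl hk hw1 hw2 (sumW C1 C2).
  have cU := @comb _ _ _ _ _ _ hk hl hu3 hu4 (sumU C3 C4).
  split; first by split.
  pose i0 : 'I_k := Ordinal hk; pose j0 : 'I_l := Ordinal hl.
  have dg : (2 %| (g%:Z - h%:Z))%Z.
    apply/dvdzP; exists ((X11 *m J g 1) i0 0 - (X12 *m J h 1) i0 0).
    have [w _] := cW i0; move: w; rewrite W1e; genprod; genent; lia.
  have de : (2 %| (e%:Z - f%:Z))%Z.
    apply/dvdzP; exists ((Y11 *m J e 1) j0 0 - (Y12 *m J f 1) j0 0).
    have [w _] := cU j0; move: w; rewrite U3e; genprod; genent; lia.
  have qg := divzK dg; have qe := divzK de.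
  split => //.
  + rewrite mul_block_col J_col scale_col_mx !mulmxN; congr (col_mx _ _); apply/matrixP => i j;
      rewrite ord1 entB entZ entJ mulr1.
    * by have [w _] := cW i; move: w; rewrite W1e; genprod; genent; lia.
    * by have [_ w] := cW i; move: w; rewrite W2e; genprod; genent; lia.
  + rewrite mul_block_col J_col scale_col_mx !mulmxN; congr (col_mx _ _); apply/matrixP => i j;
      rewrite ord1 entB entZ entJ mulr1.
    * by have [w _] := cU i; move: w; rewrite U3e; genprod; genent; lia.
    * by have [_ w] := cU i; move: w; rewrite U4e; genprod; genent; lia.
- case=> [[C1 C2 C3 C4] [dg de hX hY]].
  have qg := divzK dg; have qe := divzK de.
  move: hX; rewrite mul_block_col J_col scale_col_mx !mulmxN => /eq_col_mx [/matrixP hX1 /matrixP hX2].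
  move: hY; rewrite mul_block_col J_col scale_col_mx !mulmxN => /eq_col_mx [/matrixP hY1 /matrixP hY2].
  split => //.
  + exact: neqAB hk habcd.
  + have : (A + E) *m (A + E)^T - A *m A^T = 0.
      rewrite hR; apply: (@rowback (((g%:Z - h%:Z) %/ 2)%Z + c%:Z - d%:Z));
        apply/matrixP => i j; rewrite ord1 entZ entJ mulr1.
      * have := hY1 i 0; rewrite entB entZ entJ mulr1 U3e; genprod; genent; lia.
      * have := hY2 i 0; rewrite entB entZ entJ mulr1 U4e; genprod; genent; lia.
      * have := hX1 i 0; rewrite entB entZ entJ mulr1 W1e; genprod; genent; lia.
      * have := hX2 i 0; rewrite entB entZ entJ mulr1 W2e; genprod; genent; lia.
    by move/eqP; rewrite subr_eq0 => /eqP ->.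
  + have : (A + E)^T *m (A + E) - A^T *m A = 0.
      by rewrite hC; apply: colback; apply/UgP'.
    by move/eqP; rewrite subr_eq0 => /eqP ->.
Qed.
End T.

Theorem theorem4p15 (k l a b c d e f g h : nat)
  (X11 : 'M[int]_(k, g)) (X12 : 'M[int]_(k, h))
  (X21 : 'M[int]_(k, g)) (X22 : 'M[int]_(k, h))
  (Y11 : 'M[int]_(l, e)) (Y12 : 'M[int]_(l, f))
  (Y21 : 'M[int]_(l, e)) (Y22 : 'M[int]_(l, f)) :
  (0 < k)%N -> (0 < l)%N -> (0 < a + b + c + d)%N -> (0 < e + f)%N -> (0 < g + h)%N ->
  Emat k l a b c d e f g h *m J _ 1 = 0 ->
  J 1 _ *m Emat k l a b c d e f g h = 0 ->
  is01 X11 -> is01 X12 -> is01 X21 -> is01 X22 ->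
  is01 Y11 -> is01 Y12 -> is01 Y21 -> is01 Y22 ->
  let A := Amat k l a b c d e f g h X11 X12 X21 X22 Y11 Y12 Y21 Y22 in
  gram_mates A (A + Emat k l a b c d e f g h) <->
  ((* condition 1: equal column sums *)
   [/\ J 1 k *m X11 = J 1 k *m X21, J 1 k *m X12 = J 1 k *m X22,
       J 1 l *m Y11 = J 1 l *m Y21 & J 1 l *m Y12 = J 1 l *m Y22]
   /\
   (* condition 2 *)
   [/\ (2 %| (g%:Z - h%:Z))%Z,
       (2 %| (e%:Z - f%:Z))%Z,
       block_mx X11 X12 X21 X22 *m col_mx (J g 1) (- J h 1)
         = ((g%:Z - h%:Z) %/ 2)%Z *: J (k + k) 1
     & block_mx Y11 Y12 Y21 Y22 *m col_mx (J e 1) (- J f 1)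
         = ((e%:Z - f%:Z) %/ 2)%Z *: J (l + l) 1]).
Proof. exact: main. Qed.
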